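(* For all integers $m\ge1$ and $r\ge0$: (i) for all $n,k\ge0$, $W_{m,r}(n+1,k+1)=\sum_{j\ge0}\frac{n+1}{k+1}\binom{k+j}{j}c_j\,m^j\,W_{m,r}(n,k+j)$ (a finite sum since $W_{m,r}(n,i)=0$ for $i>n$); (ii) for all $n\ge1$ and $1\le k\le n$, $W_{m,r}(n,k)-rW_{m,r}(n-1,k)=\sum_{l=k}^n\binom{n-1}{l-1}m^{n-l}W_{m,r}(l-1,k-1)$; (iii) for all $n\ge1$ and $1\le k\le n$, $k\,W_{m,r}(n,k)=\sum_{l=k}^n\binom{n}{l-1}m^{n-l}W_{m,r}(l-1,k-1)$.
   Context: For integers $m\ge1$, $n,k,r\ge0$, $W_{m,r}(n,k)$ denotes the $r$-Whitney number of the second kind, defined by $\sum_{n\ge k}W_{m,r}(n,k)\frac{z^n}{n!}=\frac{e^{rz}}{k!}\left(\frac{e^{mz}-1}{m}\right)^k$ (and $W_{m,r}(n,k)=0$ for $k>n$). The Cauchy numbers of the first kind are $c_n=\int_0^1x(x-1)\cdots(x-n+1)\,dx$, equivalently $\frac{t}{\ln(1+t)}=\sum_{n\ge0}c_n\frac{t^n}{n!}$. *)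

(* Defs.v *)
From HB Require Import structures.
From mathcomp Require Import all_boot all_order all_algebra.
Set Implicit Arguments. Unset Strict Implicit. Unset Printing Implicit Defensive.
Import Order.TTheory GRing.Theory Num.Theory.
Local Open Scope ring_scope.

Definition expTrunc (r N : nat) : {poly rat} :=
  \sum_(i < N.+1) ((r%:R ^+ i) / (i`!)%:R) *: 'X^i.

(* Truncation (up to degree N) of (e^{m z} - 1)/m = sum_{i>=1} m^{i-1} z^i / i!. *)
Definition expm1Trunc (m N : nat) : {poly rat} :=
  \sum_(1 <= i < N.+1) ((m%:R ^+ i.-1) / (i`!)%:R) *: 'X^i.

(* r-Whitney numbers of the second kind, defined through the exponential
   generating function  sum_n W(n,k) z^n/n! = e^{rz}/k! ((e^{mz}-1)/m)^k :
   W(n,k) = n!/k! * [z^n] (e^{rz} ((e^{mz}-1)/m)^k).  Truncating the series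
   at degree n does not change the coefficient of z^n. *)
Definition Whitney (m r n k : nat) : rat :=
  (n`!)%:R / (k`!)%:R * (expTrunc r n * expm1Trunc m n ^+ k)`_n.

(* Cauchy numbers of the first kind: c_n = int_0^1 x(x-1)...(x-n+1) dx,
   computed as the integral over [0,1] of the polynomial. *)
Definition fallpoly (n : nat) : {poly rat} := \prod_(j < n) ('X - (j%:R)%:P).

Definition cauchy (n : nat) : rat :=
  \sum_(i < size (fallpoly n)) (fallpoly n)`_i / (i.+1)%:R.

(* Main.v *)
Require Import Defs.
From HB Require Import structures.
From mathcomp Require Import all_boot all_order all_algebra zify ring.
Import Order.TTheory GRing.Theory Num.Theory.
Local Open Scope ring_scope.

Definition eqN N (p q : {poly rat}) := forall i, (i <= N)%N -> p`_i = q`_i.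

Lemma eqN_refl N p : eqN N p p. Proof. by []. Qed.
Lemma eqN_sym N p q : eqN N p q -> eqN N q p. Proof. by move=> h i hi; rewrite h. Qed.
Lemma eqN_trans N p q s : eqN N p q -> eqN N q s -> eqN N p s.
Proof. by move=> h1 h2 i hi; rewrite h1 ?h2. Qed.
Lemma eqN_le N M p q : (M <= N)%N -> eqN N p q -> eqN M p q.
Proof. by move=> hM h i hi; rewrite h // (leq_trans hi hM). Qed.
Lemma eqN_mul N p p' q q' : eqN N p p' -> eqN N q q' -> eqN N (p * q) (p' * q').
Proof.
move=> hp hq i hi; rewrite !coefM; apply: eq_bigr => j _.
have hj : (j <= N)%N by rewrite (leq_trans _ hi) // -ltnS.
by rewrite hp // hq // (leq_trans (leq_subr _ _) hi).
Qed.
Lemma eqN_add N p p' q q' : eqN N p p' -> eqN N q q' -> eqN N (p + q) (p' + q').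
Proof. by move=> hp hq i hi; rewrite !coefD hp ?hq. Qed.
Lemma eqN_scale N a p q : eqN N p q -> eqN N (a *: p) (a *: q).
Proof. by move=> hp i hi; rewrite !coefZ hp. Qed.
Lemma eqN_exp N p q k : eqN N p q -> eqN N (p ^+ k) (q ^+ k).
Proof.
move=> h; elim: k => [|k IH]; first exact: eqN_refl.
by rewrite !exprS; apply: eqN_mul.
Qed.

Definition low k (p : {poly rat}) := forall i, (i < k)%N -> p`_i = 0.
Lemma low_mul a b p q : low a p -> low b q -> low (a + b) (p * q).
Proof.
move=> hp hq i hi; rewrite coefM big1 // => j _.
case: (ltnP j a) => hj; first by rewrite hp // mul0r.
rewrite hq ?mulr0 //; have := ltn_ord j; lia.
Qed.
Lemma low_exp a p k : low a p -> low (a * k) (p ^+ k).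
Proof.
move=> h; elim: k => [|k IH]; first by move=> i; rewrite muln0.
by rewrite exprS mulnS; apply: low_mul.
Qed.

Lemma fnz n : (n`!)%:R != 0 :> rat.
Proof. by rewrite pnatr_eq0 -lt0n fact_gt0. Qed.
Lemma nnz n : (n.+1)%:R != 0 :> rat.
Proof. by rewrite pnatr_eq0. Qed.

Lemma coef_expTrunc r N i :
  (expTrunc r N)`_i = if (i <= N)%N then r%:R ^+ i / (i`!)%:R else 0.
Proof.
rewrite /expTrunc (_ : \sum_(i < N.+1) _ = \poly_(i < N.+1) (r%:R ^+ i / (i`!)%:R)).
  by rewrite coef_poly ltnS.
by rewrite poly_def.
Qed.

Lemma sum_delta a b i (c : nat -> rat) :
  \sum_(a <= j < b) c j * (i == j)%:R = if (a <= i < b)%N then c i else 0.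
Proof.
rewrite (bigID (fun j => j == i)) /= [X in _ + X]big1 => [|j /negbTE]; last first.
  by rewrite eq_sym => ->; rewrite mulr0.
rewrite addr0 (eq_bigr (fun j => c j)) => [|j /eqP ->]; last by rewrite eqxx mulr1.
by rewrite big_nat1_eq.
Qed.

Lemma coef_expm1 m N i :
  (expm1Trunc m N)`_i = if (0 < i <= N)%N then m%:R ^+ i.-1 / (i`!)%:R else 0.
Proof.
rewrite /expm1Trunc coef_sum.
under eq_bigr => j _ do rewrite coefZ coefXn.
by rewrite sum_delta ltnS.
Qed.

Definition PP m r N k := expTrunc r N * expm1Trunc m N ^+ k.

Lemma eqN_expTrunc r N M : (M <= N)%N -> eqN M (expTrunc r N) (expTrunc r M).
Proof. by move=> h i hi; rewrite !coef_expTrunc hi (leq_trans hi h). Qed.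
Lemma eqN_expm1 m N M : (M <= N)%N -> eqN M (expm1Trunc m N) (expm1Trunc m M).
Proof.
move=> h i hi; rewrite !coef_expm1 hi (leq_trans hi h).
by case: i hi.
Qed.
Lemma PP_eqN m r N M k : (M <= N)%N -> eqN M (PP m r N k) (PP m r M k).
Proof.
by move=> h; apply: eqN_mul; [apply: eqN_expTrunc | apply/eqN_exp/eqN_expm1].
Qed.
Lemma Whitney_N m r N n k : (n <= N)%N ->
  Whitney m r n k = n`!%:R / k`!%:R * (PP m r N k)`_n.
Proof. by move=> h; rewrite /Whitney -/(PP m r n k) -(PP_eqN m r N n k h n (leqnn n)). Qed.

Lemma low_PP m r N k : low k (PP m r N k).
Proof.
rewrite /PP -[k]add0n; apply: low_mul; first by [].
have := @low_exp 1 (expm1Trunc m N) k; rewrite mul1n; apply.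
by move=> i; rewrite ltnS leqn0 => /eqP ->; rewrite coef_expm1.
Qed.
Lemma Whitney_small m r n k : (n < k)%N -> Whitney m r n k = 0.
Proof. by move=> h; rewrite /Whitney -/(PP m r n k) low_PP // mulr0. Qed.

Lemma binr n j : (j <= n)%N ->
  ('C(n, j))%:R = (n`!)%:R / ((j`!)%:R * ((n - j)`!)%:R) :> rat.
Proof.
move=> h; rewrite -(bin_fact h) natrM natrM mulfK //.
by rewrite mulf_neq0 // fnz.
Qed.

Lemma iiiJ m r n k : (k.+1)%:R * Whitney m r n k.+1 =
  \sum_(j < n) ('C(n, j))%:R * m%:R ^+ (n - j.+1) * Whitney m r j k.
Proof.
case: n => [|n]; first by rewrite Whitney_small // mulr0 big_ord0.
rewrite (@Whitney_N m r n.+1) // /PP exprSr (mulrA (expTrunc _ _)) coefM big_ord_recr /=.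
rewrite subnn coef_expm1 /= mulr0 addr0 mulrA mulr_sumr.
apply: eq_bigr => j _ /=.
have hj : (j <= n.+1)%N by apply: ltnW.
rewrite (@Whitney_N m r n.+1 _ _ hj) coef_expm1 (@binr _ _ hj).
have -> : (0 < n.+1 - j <= n.+1)%N by have := ltn_ord j; lia.
rewrite -/(PP m r n.+1 k) (factS k) natrM subnS.
have h1 := fnz k; have h2 := fnz j; have h3 := fnz (n.+1 - j); have h4 := nnz k. field.
by rewrite h1 h2 h3 addrC natr1 h4.
Qed.

Lemma eqN_muln N p q k : eqN N p q -> eqN N (p *+ k) (q *+ k).
Proof. by move=> h i hi; rewrite !coefMn h. Qed.

Lemma dE r n : eqN n (expTrunc r n.+1)^`() (r%:R *: expTrunc r n.+1).
Proof.
move=> j hj; rewrite coef_deriv coefZ !coef_expTrunc ltnS hj (leq_trans hj) //.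
rewrite factS natrM exprS -mulr_natr.
have := fnz j; have := nnz j => h1 h2; field.
by rewrite h2 addrC natr1 h1.
Qed.

Lemma dF m n : eqN n (expm1Trunc m n.+1)^`() (1 + (m%:R : rat) *: expm1Trunc m n.+1).
Proof.
move=> j hj; rewrite coef_deriv coefD coefZ coef1 !coef_expm1 /=.
case: j hj => [|j] hj /=.
  by rewrite expr0 mulr1n mulr0 addr0 divr1.
rewrite ltnS hj (ltn_trans _ (ltnSn n)) ?ltnS // add0r factS natrM exprS -mulr_natr.
have := fnz j.+1; have := nnz j.+1 => h1 h2; field.
by rewrite h2 -natrD pnatr_eq0.
Qed.

Lemma recW m r n k : Whitney m r n.+1 k.+1 =
  Whitney m r n k + (m%:R * (k.+1)%:R + r%:R) * Whitney m r n k.+1.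
Proof.
set E := expTrunc r n.+1; set F := expm1Trunc m n.+1.
have key : eqN n (PP m r n.+1 k.+1)^`()
   (r%:R *: PP m r n.+1 k.+1 + (PP m r n.+1 k + (m%:R:rat) *: PP m r n.+1 k.+1) *+ k.+1).
  rewrite /PP -/E -/F derivM deriv_exp /=.
  apply: (@eqN_trans _ _ (r%:R *: E * F ^+ k.+1 + E * ((1 + (m%:R:rat) *: F) * F ^+ k *+ k.+1))).
    apply: eqN_add; first by apply: eqN_mul; [apply: dE | apply: eqN_refl].
    apply: eqN_mul; first exact: eqN_refl.
    by apply/eqN_muln/eqN_mul; [apply: dF | apply: eqN_refl].
  have -> : r%:R *: E * F ^+ k.+1 + E * ((1 + (m%:R:rat) *: F) * F ^+ k *+ k.+1) =
    r%:R *: (E * F ^+ k.+1) + (E * F ^+ k + (m%:R:rat) *: (E * F ^+ k.+1)) *+ k.+1.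
    rewrite mulrnAr -scalerAl; congr (_ + _ *+ _).
    by rewrite -!mul_polyC !exprS; ring.
  exact: eqN_refl.
have := key n (leqnn n).
rewrite coef_deriv coefD coefZ coefMn coefD coefZ => h.
rewrite (@Whitney_N m r n.+1 n.+1) // (@Whitney_N m r n.+1 n) //.
rewrite (@Whitney_N m r n.+1 n k.+1) //.
rewrite factS (factS k) !natrM.
move: h; set a := (PP _ _ _ _)`_n.+1; set b := (PP _ _ _ _)`_n; set c := (PP _ _ _ _)`_n.
move=> h.
have -> : a = (r%:R * b + (c + m%:R * b) * (k.+1)%:R) / (n.+1)%:R.
  by rewrite !mulr_natr -h -(mulr_natr a) mulfK // nnz.
have := fnz k; have := fnz n; have := nnz k; have := nnz n => h1 h2 h3 h4.
field.
by rewrite h4 !nat1r !nnz.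
Qed.

Lemma shiftsum k n (H : nat -> rat) : (k <= n)%N ->
  (forall j, (j < k)%N -> H j.+1 = 0) ->
  \sum_(k.+1 <= l < n.+1) H l = \sum_(j < n) H j.+1.
Proof.
move=> hk hz; rewrite big_add1 succnK.
transitivity (\sum_(0 <= j < n) H j.+1); last by rewrite big_mkord.
rewrite (big_cat_nat _ (n:=k) (m:=0)) //=.
rewrite [X in X + _]big1_seq ?add0r // => j /andP [_]; rewrite mem_iota => /andP [_ h].
by apply: hz; rewrite add0n subn0 in h.
Qed.

Lemma partiii m r n k : (1 <= n)%N -> (1 <= k <= n)%N ->
     k%:R * Whitney m r n k =
     \sum_(k <= l < n.+1)
        ('C(n, l.-1))%:R * (m%:R ^+ (n - l)) * Whitney m r l.-1 k.-1.
Proof.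
move=> _; case: k => [//|k] /= hk.
rewrite iiiJ shiftsum //; last by move=> j hj /=; rewrite Whitney_small // mulr0.
exact: ltnW.
Qed.

Lemma partii m r n k : (1 <= n)%N -> (1 <= k <= n)%N ->
     Whitney m r n k - r%:R * Whitney m r n.-1 k =
     \sum_(k <= l < n.+1)
        ('C(n.-1, l.-1))%:R * (m%:R ^+ (n - l)) * Whitney m r l.-1 k.-1.
Proof.
case: n => [//|n] _; case: k => [//|k] /= hk.
rewrite shiftsum //; last by move=> j hj /=; rewrite Whitney_small // mulr0.
rewrite big_ord_recr /= binn subSS subnn expr0 mulr1 mul1r.
rewrite (_ : \sum_(i < n) _ = m%:R * ((k.+1)%:R * Whitney m r n k.+1)); last first.
  rewrite iiiJ mulr_sumr; apply: eq_bigr => j _ /=.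
  have hj := ltn_ord j.
  rewrite subSS (_ : (n - j = (n - j.+1).+1)%N); last by lia.
  by rewrite exprS; ring.
rewrite recW; ring.
exact: ltnW.
Qed.

Definition ET (a : rat) N : {poly rat} := \poly_(i < N.+1) (a ^+ i / (i`!)%:R).

Lemma coef_ET a N i : (ET a N)`_i = if (i <= N)%N then a ^+ i / (i`!)%:R else 0.
Proof. by rewrite coef_poly ltnS. Qed.

Lemma ET_mul N a b : eqN N (ET a N * ET b N) (ET (a + b) N).
Proof.
move=> i hi; rewrite coefM coef_ET hi addrC exprDn mulr_suml.
apply: eq_bigr => j _.
have hj : (j <= i)%N by rewrite -ltnS.
rewrite !coef_ET (leq_trans hj hi) (leq_trans (leq_subr _ _) hi).
rewrite -(mulr_natr _ 'C(i, j)) (@binr _ _ hj).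
have := fnz j; have := fnz i; have := fnz (i - j) => h1 h2 h3.
field.
by rewrite h1 h2 h3.
Qed.

Lemma ET0 N : eqN N (ET 0 N) 1.
Proof.
move=> i hi; rewrite coef_ET hi coef1 expr0n.
by case: i {hi} => [|i] /=; rewrite ?mul0r // divr1.
Qed.

Lemma ET_exp N a t : eqN N (ET a N ^+ t) (ET (a *+ t) N).
Proof.
elim: t => [|t IH]; first by rewrite expr0 mulr0n; apply/eqN_sym/ET0.
rewrite exprS mulrS; apply: eqN_trans (ET_mul N a (a *+ t)).
by apply: eqN_mul => //; apply: eqN_refl.
Qed.

Lemma Y1 m N : eqN N ((m%:R : rat) *: expm1Trunc m N + 1) (ET m%:R N).
Proof.
move=> i hi; rewrite coefD coefZ coef1 coef_expm1 coef_ET hi.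
case: i hi => [|i] hi /=; first by rewrite mulr0 add0r expr0 divr1.
by rewrite addr0 exprS mulrA.
Qed.

Lemma binsum m n t i : (t <= n)%N -> (i <= n.+1)%N ->
  \sum_(j < n.+1) ('C(t, j))%:R * (((m%:R : rat) *: expm1Trunc m n.+1) ^+ j)`_i
  = (m%:R * t%:R) ^+ i / (i`!)%:R.
Proof.
move=> ht hi.
set Y := (m%:R : rat) *: expm1Trunc m n.+1.
rewrite (_ : \sum_(j < n.+1) _ = \sum_(j < t.+1) ('C(t, j))%:R * (Y ^+ j)`_i); last first.
  rewrite (big_ord_widen _ (fun j => ('C(t, j))%:R * (Y ^+ j)`_i) (_ : t.+1 <= n.+1)%N) //.
  rewrite [RHS]big_mkcond /=; apply: eq_bigr => j _; case: ifP => // h.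
  by rewrite bin_small ?mul0r // ltnNge -ltnS h.
under eq_bigr => j _ do rewrite mulr_natl -coefMn.
rewrite -coef_sum -exprD1n.
rewrite (@eqN_exp _ _ _ t (Y1 m n.+1) i hi) (ET_exp _ _ _ _ hi) coef_ET hi.
by rewrite mulr_natr.
Qed.

Lemma size_fallpoly j : (size (fallpoly j) <= j.+1)%N.
Proof.
elim: j => [|j IH]; first by rewrite /fallpoly big_ord0 size_poly1.
rewrite /fallpoly big_ord_recr /= -/(fallpoly j).
apply: leq_trans (size_polyMleq _ _) _.
by rewrite size_XsubC addn2 /=.
Qed.

Lemma horner_fallpoly j t : (fallpoly j).[t%:R] = (t ^_ j)%:R.
Proof.
elim: j => [|j IH]; first by rewrite /fallpoly big_ord0 hornerC ffactn0.
rewrite /fallpoly big_ord_recr /= -/(fallpoly j) hornerM hornerXsubC IH.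
rewrite ffactnSr natrM; case: (leqP j t) => h; first by rewrite natrB.
by rewrite ffact_small // !mul0r.
Qed.

Lemma polyid m n i : (i <= n)%N ->
  \sum_(j < n.+1) ((((m%:R : rat) *: expm1Trunc m n.+1) ^+ j)`_i / (j`!)%:R) *: fallpoly j
  = ((m%:R : rat) ^+ i / (i`!)%:R) *: 'X^i.
Proof.
move=> hi; apply/eqP; rewrite -subr_eq0; apply/eqP.
set Q := _ - _.
case: (eqVneq Q 0) => // hQ; exfalso.
have hs : (size Q <= n.+1)%N.
  apply/leq_sizeP => l hl; rewrite coefB coef_sum coefZ coefXn.
  rewrite (_ : (l == i) = false) ?mulr0 ?subr0; last by apply/negbTE; lia.
  rewrite big1 // => j _; rewrite coefZ (nth_default _ (_ : size (fallpoly j) <= l)%N) ?mulr0 //.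
  apply: leq_trans (size_fallpoly j) _; exact: leq_trans (ltn_ord j) hl.
set rs := [seq (t%:R : rat) | t <- iota 0 n.+1].
have hall : all (root Q) rs.
  apply/allP => x /mapP [t]; rewrite mem_iota add0n => /andP [_ ht] ->.
  apply/rootP; rewrite /Q hornerD hornerN horner_sum hornerZ hornerXn.
  under eq_bigr => k _ do rewrite hornerZ horner_fallpoly.
  apply/eqP; rewrite subr_eq0; apply/eqP.
  rewrite (_ : \sum_(j < n.+1) _ = \sum_(j < n.+1) ('C(t, j))%:R *
       ((((m%:R : rat) *: expm1Trunc m n.+1) ^+ j)`_i)); last first.
    apply: eq_bigr => k _; rewrite -bin_ffact natrM.
    by have := fnz k => h; field.
  rewrite binsum //; last exact: (leq_trans hi).
  by rewrite exprMn; have := fnz i => h; field.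
have huniq : uniq rs.
  rewrite map_inj_uniq ?iota_uniq // => x y /eqP; rewrite eqr_nat => /eqP //.
have := max_poly_roots hQ hall huniq; rewrite size_map size_iota.
by rewrite ltnNge hs.
Qed.

Definition Iint M (p : {poly rat}) := \sum_(l < M) p`_l / (l.+1)%:R.

Lemma cauchy_I M j : (size (fallpoly j) <= M)%N -> cauchy j = Iint M (fallpoly j).
Proof.
move=> h; rewrite /cauchy /Iint (big_ord_widen _ (fun l => (fallpoly j)`_l / (l.+1)%:R) h).
rewrite [LHS]big_mkcond /=; apply: eq_bigr => l _; case: ifP => // hl.
by rewrite nth_default ?mul0r // leqNgt hl.
Qed.

Lemma Iint_lin M K (c : nat -> rat) (p : nat -> {poly rat}) :
  Iint M (\sum_(j < K) c j *: p j) = \sum_(j < K) c j * Iint M (p j).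
Proof.
rewrite /Iint (eq_bigr (fun l : 'I_M => \sum_(j < K) (c j *: p j)`_l / (l.+1)%:R)); last first.
  by move=> l _; rewrite coef_sum mulr_suml.
rewrite exchange_big /=; apply: eq_bigr => j _; rewrite mulr_sumr.
by apply: eq_bigr => l _; rewrite coefZ mulrA.
Qed.

Lemma Iint_X M i c : (i < M)%N -> Iint M (c *: 'X^i) = c / (i.+1)%:R.
Proof.
move=> h; rewrite /Iint (bigD1 (Ordinal h)) //= coefZ coefXn eqxx mulr1.
rewrite big1 ?addr0 // => l hl; rewrite coefZ coefXn.
rewrite (_ : (l == i :> nat) = false) ?mulr0 ?mul0r //.
by apply/negbTE; apply: contra hl => /eqP e; apply/eqP/val_inj.
Qed.

Lemma cauchy_sum m n i : (i <= n)%N ->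
  \sum_(j < n.+1) ((((m%:R : rat) *: expm1Trunc m n.+1) ^+ j)`_i / (j`!)%:R) * cauchy j
  = (m%:R : rat) ^+ i / ((i.+1)`!)%:R.
Proof.
move=> hi.
have := congr1 (Iint n.+1) (@polyid m n i hi).
rewrite (Iint_lin _ _ (fun j => ((((m%:R:rat) *: expm1Trunc m n.+1) ^+ j)`_i / (j`!)%:R)) fallpoly) Iint_X // => h.
rewrite (eq_bigr (fun j : 'I_n.+1 => ((((m%:R:rat) *: expm1Trunc m n.+1) ^+ j)`_i / (j`!)%:R) * Iint n.+1 (fallpoly j))); last first.
  move=> j _; rewrite (@cauchy_I n.+1) //.
  exact: leq_trans (size_fallpoly j) (ltn_ord j).
rewrite h factS natrM; have := fnz i; have := nnz i => h1 h2; field.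
by rewrite h2 nat1r h1.
Qed.

Lemma Hcoef m n i : (i <= n)%N ->
  (\sum_(j < n.+1) (cauchy j * (m%:R : rat) ^+ j / (j`!)%:R) *: expm1Trunc m n.+1 ^+ j)`_i
  = (m%:R : rat) ^+ i / ((i.+1)`!)%:R.
Proof.
move=> hi; rewrite -(@cauchy_sum m n i hi) coef_sum; apply: eq_bigr => j _.
rewrite coefZ exprZn coefZ; have := fnz j => h; field.
by [].
Qed.

Lemma parti m r n k : Whitney m r n.+1 k.+1 =
  \sum_(j < n.+1)
    (n.+1)%:R / (k.+1)%:R * ('C(k + j, j))%:R * cauchy j
      * (m%:R ^+ j) * Whitney m r n (k + j).
Proof.
set F := expm1Trunc m n.+1; set P := PP m r n.+1 k.
set Hp := \sum_(j < n.+1) (cauchy j * (m%:R : rat) ^+ j / (j`!)%:R) *: F ^+ j.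
have eB : \sum_(j < n.+1) (cauchy j * (m%:R : rat) ^+ j / (j`!)%:R) * (P * F ^+ j)`_n
          = (P * Hp)`_n.
  rewrite /Hp mulr_sumr coef_sum; apply: eq_bigr => j _.
  by rewrite -scalerAr coefZ.
have eC : (P * Hp)`_n = \sum_(l < n.+1) P`_l * ((m%:R : rat) ^+ (n - l) / ((n - l).+1`!)%:R).
  rewrite coefM; apply: eq_bigr => l _; rewrite /Hp Hcoef //; exact: leq_subr.
have eD : (PP m r n.+1 k.+1)`_n.+1 =
    \sum_(l < n.+1) P`_l * ((m%:R : rat) ^+ (n - l) / ((n - l).+1`!)%:R).
  rewrite /PP exprSr (mulrA (expTrunc _ _)) -/(PP m r n.+1 k) -/P -/F coefM big_ord_recr /=.
  rewrite subnn /F coef_expm1 /= mulr0 addr0; apply: eq_bigr => l _.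
  have hl : (l <= n)%N by rewrite -ltnS.
  rewrite coef_expm1 (_ : (n.+1 - l = (n - l).+1)%N) ?subSn //=.
  by rewrite ltnS leq_subr.
rewrite (@Whitney_N m r n.+1) // eD -eC -eB mulr_sumr.
apply: eq_bigr => j _.
have hj : (j <= k + j)%N by apply: leq_addl.
rewrite (@Whitney_N m r n.+1) // /PP exprD (mulrA (expTrunc _ _)) -/(PP m r n.+1 k) -/P -/F.
rewrite (@binr _ _ hj) addnK !factS !natrM.
have := fnz k; have := fnz j; have := fnz (k + j); have := fnz n; have := nnz k; have := nnz n.
move=> h1 h2 h3 h4 h5 h6; field.
by rewrite h4 h5 h6 nat1r nnz.
Qed.

Theorem mainTheorem18 (m r : nat) (hm : (1 <= m)%N) :
  (forall n k : nat,
     Whitney m r n.+1 k.+1 =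
     \sum_(j < n.+1)
        (n.+1)%:R / (k.+1)%:R * ('C(k + j, j))%:R * cauchy j
          * (m%:R ^+ j) * Whitney m r n (k + j)) /\
  (forall n k : nat, (1 <= n)%N -> (1 <= k <= n)%N ->
     Whitney m r n k - r%:R * Whitney m r n.-1 k =
     \sum_(k <= l < n.+1)
        ('C(n.-1, l.-1))%:R * (m%:R ^+ (n - l)) * Whitney m r l.-1 k.-1) /\
  (forall n k : nat, (1 <= n)%N -> (1 <= k <= n)%N ->
     k%:R * Whitney m r n k =
     \sum_(k <= l < n.+1)
        ('C(n, l.-1))%:R * (m%:R ^+ (n - l)) * Whitney m r l.-1 k.-1).
Proof.
split; first exact: parti.
split; [exact: partii | exact: partiii].
Qed.
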